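(* Let $S$ be a semigroup, $I$ an interior ideal of $S$, and $a\in S$ with $a\notin I$. Then there exists an irreducible interior ideal $B$ of $S$ such that $I\subseteq B$ and $a\notin B$.
   Context: A subsemigroup $I$ of $S$ (non-empty with $II\subseteq I$) is an interior ideal if $SIS\subseteq I$. An interior ideal $I$ is irreducible if for all interior ideals $I_1,I_2$ of $S$, $I_1\cap I_2=I$ implies $I_1=I$ or $I_2=I$. *)

(* Defs.v *)
Definition associative_op {S : Type} (mul : S -> S -> S) : Prop :=
  forall x y z : S, mul x (mul y z) = mul (mul x y) z.

Definition subsemigroup {S : Type} (mul : S -> S -> S) (I : S -> Prop) : Prop :=
  (exists x, I x) /\ (forall x y, I x -> I y -> I (mul x y)).

Definition interior_ideal {S : Type} (mul : S -> S -> S) (I : S -> Prop) : Prop :=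
  subsemigroup mul I /\ (forall s x t, I x -> I (mul (mul s x) t)).

Definition set_eq {S : Type} (A B : S -> Prop) : Prop := forall x, A x <-> B x.

Definition irreducible_interior_ideal {S : Type} (mul : S -> S -> S)
    (I : S -> Prop) : Prop :=
  interior_ideal mul I /\
  (forall I1 I2 : S -> Prop, interior_ideal mul I1 -> interior_ideal mul I2 ->
     set_eq (fun x => I1 x /\ I2 x) I -> set_eq I1 I \/ set_eq I2 I).

(* Main.v *)
Require Import Defs.
From Stdlib Require Import Classical.
From mathcomp Require Import all_boot.
From mathcomp Require Import boolp classical_sets.

Local Open Scope classical_set_scope.

Theorem mainTheorem11 (S : Type) (mul : S -> S -> S)
  (Hassoc : associative_op mul) (I : S -> Prop) (HI : interior_ideal mul I)
  (a : S) (Ha : ~ I a) :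
  exists B : S -> Prop, irreducible_interior_ideal mul B /\
    (forall x, I x -> B x) /\ ~ B a.
Proof.
pose P (J : set S) := interior_ideal mul J /\ (forall x, I x -> J x) /\ ~ J a.
pose P2 (J : set S) := P J \/ J = set0.
have PI : P I by split => //; split.
have [A [PA Amax]] : exists A, P2 A /\ forall B, A `<` B -> ~ P2 B.
  apply: Zorn_bigcup => F FP Ftot.
  have [[x [X FX Xx]]|ne] := Classical_Prop.classic (exists x, (\bigcup_(X in F) X) x); last first.
    right; apply/seteqP; split => // x Hx; apply: ne; by exists x.
  have PX : forall X y, F X -> X y -> P X.
    move=> Y y FY Yy; case: (FP _ FY) => // E; by rewrite E in Yy.
  have PX0 := PX _ _ FX Xx.
  left; split; [split; [split|] | split].
  - by exists x; exists X.
  - move=> y z [Y FY Yy] [Z FZ Zz].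
    have [[[_ HY] _] _] := PX _ _ FY Yy; have [[[_ HZ] _] _] := PX _ _ FZ Zz.
    case: (Ftot _ _ FY FZ) => sub.
    + by exists Z => //; apply: HZ => //; apply: sub.
    + by exists Y => //; apply: HY => //; apply: sub.
  - move=> s y t [Y FY Yy]; have [[_ HY] _] := PX _ _ FY Yy.
    by exists Y => //; apply: HY.
  - by move=> y Iy; exists X => //; case: PX0 => _ [H _]; apply: H.
  - by move=> [Y FY Ya]; have [_ [_ H]] := PX _ _ FY Ya.
have {}PA : P A.
  case: PA => // A0; exfalso; apply: (Amax I); last by left.
  rewrite A0; split => //; case: HI => [[[x Ix] _] _] H.
  by have := H x Ix.
exists A; split; last by case: PA => _ [].
split; first by case: PA.
move=> I1 I2 H1 H2 Heq.
have sub1 : forall x, A x -> I1 x by move=> x /Heq [].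
have sub2 : forall x, A x -> I2 x by move=> x /Heq [].
have gen : forall J, interior_ideal mul J -> (forall x, A x -> J x) ->
    set_eq J A \/ J a.
  move=> J HJ sJ; case: (Classical_Prop.classic (J a)) => Ja; first by right.
  case: (Classical_Prop.classic (set_eq J A)) => E; first by left.
  exfalso; apply: (Amax J).
    split; first by move=> x; apply: sJ.
    move=> sub; apply: E => x; split; [exact: sub | exact: sJ].
  left; split => //; split => // x Ix; apply: sJ; case: PA => _ [H _]; exact: H.
case: (gen _ H1 sub1) => [E|I1a]; first by left.
case: (gen _ H2 sub2) => [E|I2a]; first by right.
exfalso; case: PA => _ [_ nA]; apply: nA; by apply/Heq.
Qed.
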